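(* Let $\Omega\subset\mathbb{R}^{n+1}$ be a compact convex body with $C^1$ boundary, let $\Theta\in[0,1)$, and let $r>0$ satisfy $\omega_\Omega(r)<\sqrt{2-2\Theta}$. Then for every $X_0\in\partial\Omega$, $$B^{n+1}_r(X_0)\cap\partial\Omega\subset\partial\Omega^+_\Theta(X_0),$$ and $$\{X\in\mathbb{R}^{n+1}\mid \langle X-X_0,-\mathcal{N}_\Omega(X_0)\rangle\ge\sqrt{1-\Theta^2}\,|X-X_0|\}\cap B^{n+1}_r(X_0)\subset\Omega.$$
   Context: $\mathcal{N}_\Omega(X)$ denotes the (unique) outward unit normal to $\Omega$ at $X\in\partial\Omega$. $\omega_\Omega(r):=\sup\{|\mathcal{N}_\Omega(X_1)-\mathcal{N}_\Omega(X_2)|: X_1,X_2\in\partial\Omega,\ |X_1-X_2|<r\}$. For $\Theta\ge0$ and $X_0\in\partial\Omega$, $\partial\Omega^+_\Theta(X_0):=\{X\in\partial\Omega\mid\langle\mathcal{N}_\Omega(X),\mathcal{N}_\Omega(X_0)\rangle>\Theta\}$. $B^{n+1}_r(X)$ is the open Euclidean ball. *)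

(* Defs.v *)
From HB Require Import structures.
From mathcomp Require Import all_boot all_order all_algebra.
From mathcomp Require Import all_classical all_reals all_analysis.
Set Implicit Arguments. Unset Strict Implicit. Unset Printing Implicit Defensive.
Import Order.TTheory GRing.Theory Num.Theory.
Import numFieldNormedType.Exports.
Local Open Scope classical_set_scope.
Local Open Scope ring_scope.

Section Euclid.
Variables (R : realType) (n : nat).
Notation V := 'rV[R]_(n.+1).

Definition edot (u v : V) : R := \sum_(i < n.+1) u 0 i * v 0 i.
Definition enorm (u : V) : R := Num.sqrt (edot u u).

Definition eball (X : V) (r : R) : set V := [set Y | enorm (Y - X) < r].

Definition convex_set (O : set V) : Prop :=
  forall X Y (t : R), O X -> O Y -> 0 <= t <= 1 -> O ((1 - t) *: X + t *: Y).

Definition convex_body (O : set V) : Prop :=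
  compact O /\ convex_set O /\ exists X, exists2 e : R, 0 < e & eball X e `<=` O.

Definition bdry (O : set V) : set V :=
  [set X | forall e : R, 0 < e ->
     (exists Y, O Y /\ enorm (Y - X) < e) /\ (exists Y, ~ O Y /\ enorm (Y - X) < e)].

Definition ebasis (i : 'I_n.+1) : V := delta_mx 0 i.

Definition egrad (F : V -> R) (X : V) : V := \row_i ('D_(ebasis i) F X).

Definition C1_boundary (O : set V) : Prop :=
  forall X0, bdry O X0 -> exists2 rho : R, 0 < rho &
    exists F : V -> R,
      (forall X, eball X0 rho X ->
         (forall i, derivable F X (ebasis i)) /\
         (forall i, {for X, continuous (fun Y => 'D_(ebasis i) F Y)}) /\
         egrad F X != 0 /\
         (O X <-> F X <= 0)).

Definition outward_unit_normal (O : set V) (X nu : V) : Prop :=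
  enorm nu = 1 /\ forall Y, O Y -> edot (Y - X) nu <= 0.

Definition omega (O : set V) (N : V -> V) (r : R) : R :=
  sup [set d | exists X1 X2, [/\ bdry O X1, bdry O X2, enorm (X1 - X2) < r &
                                 d = enorm (N X1 - N X2)]].

Definition bdry_plus (O : set V) (N : V -> V) (Theta : R) (X0 : V) : set V :=
  [set X | bdry O X /\ edot (N X) (N X0) > Theta].

End Euclid.

(* Main.v *)
Require Import Defs.
From HB Require Import structures.
From mathcomp Require Import all_boot all_order all_algebra.
From mathcomp Require Import all_classical all_reals all_analysis.
From mathcomp Require Import ring lra.
Import Order.TTheory GRing.Theory Num.Theory.
Import numFieldNormedType.Exports.
Local Open Scope classical_set_scope.
Local Open Scope ring_scope.

Section Helpers.
Context {R : realType} {n : nat}.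
Notation V := 'rV[R]_(n.+1).
Implicit Types (u v w : V).

Lemma edotC u v : edot u v = edot v u.
Proof. by apply: eq_bigr => i _; rewrite mulrC. Qed.

Lemma edotDl u v w : edot (u + v) w = edot u w + edot v w.
Proof. by rewrite /edot -big_split; apply: eq_bigr => i _; rewrite !mxE mulrDl. Qed.

Lemma edotZl (k : R) u w : edot (k *: u) w = k * edot u w.
Proof. by rewrite /edot mulr_sumr; apply: eq_bigr => i _; rewrite !mxE mulrA. Qed.

Lemma edotNl u w : edot (- u) w = - edot u w.
Proof. by rewrite -scaleN1r edotZl mulN1r. Qed.

Lemma edotBl u v w : edot (u - v) w = edot u w - edot v w.
Proof. by rewrite edotDl edotNl. Qed.

Lemma edotDr u v w : edot w (u + v) = edot w u + edot w v.
Proof. by rewrite edotC edotDl !(edotC w). Qed.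

Lemma edotZr (k : R) u w : edot w (k *: u) = k * edot w u.
Proof. by rewrite edotC edotZl edotC. Qed.

Lemma edotNr u w : edot w (- u) = - edot w u.
Proof. by rewrite edotC edotNl edotC. Qed.

Lemma edotBr u v w : edot w (u - v) = edot w u - edot w v.
Proof. by rewrite edotDr edotNr. Qed.

Lemma edot_ge0 u : 0 <= edot u u.
Proof. by apply: sumr_ge0 => i _; rewrite -expr2 sqr_ge0. Qed.

Lemma edot_eq0 u : edot u u = 0 -> u = 0.
Proof.
move=> h; apply/rowP => i; rewrite mxE.
have := psumr_eq0P (P := xpredT) (F := fun i => u 0 i * u 0 i) _ h (i := i).
move=> /(_ (fun j _ => ltac:(by rewrite -expr2 sqr_ge0)) isT) /eqP.
by rewrite mulf_eq0 orbb => /eqP.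
Qed.

Lemma enorm_sq u : enorm u ^+ 2 = edot u u.
Proof. by rewrite /enorm sqr_sqrtr // edot_ge0. Qed.

Lemma enorm_ge0 u : 0 <= enorm u.
Proof. exact: sqrtr_ge0. Qed.

Lemma CS u v : edot u v ^+ 2 <= edot u u * edot v v.
Proof.
have [h0|hA] := eqVneq (edot u u) 0.
  by rewrite (edot_eq0 _ h0) -[0 : V](scale0r 0) !edotZl !mul0r expr0n /=; lra.
have hA' : 0 < edot u u by rewrite lt0r hA edot_ge0.
set A := edot u u; set B := edot v v; set x := edot u v.
have := edot_ge0 ((x / A) *: u - v).
rewrite !(edotBl, edotBr, edotZl, edotZr) -/A -/B -/x (edotC v u) -/x.
move=> H.
have H2 : 0 <= A * (x / A * (x / A * A - x) - (x / A * x - B)) by rewrite mulr_ge0 // ltW.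
have E : A * (x / A * (x / A * A - x) - (x / A * x - B)) = A * B - x ^+ 2.
  by field; rewrite hA.
rewrite E in H2.
by rewrite -subr_ge0.
Qed.

Lemma dot_le_norm u v : edot u v <= enorm u * enorm v.
Proof.
have hp : 0 <= enorm u * enorm v by rewrite mulr_ge0 // enorm_ge0.
have [hx|hx] := lerP (edot u v) 0; first exact: le_trans hx hp.
rewrite -(ler_pXn2r (n:=2)) //; last by rewrite nnegrE ltW.
by rewrite exprMn !enorm_sq CS.
Qed.

Lemma enorm_triangle u v : enorm (u + v) <= enorm u + enorm v.
Proof.
rewrite -(ler_pXn2r (n:=2)) ?nnegrE ?addr_ge0 ?enorm_ge0 //.
rewrite enorm_sq sqrrD !enorm_sq !(edotDl, edotDr) (edotC v u).
have := dot_le_norm u v; lra.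
Qed.

Lemma enormZ (k : R) u : enorm (k *: u) = `|k| * enorm u.
Proof. by rewrite /enorm edotZl edotZr mulrA -expr2 sqrtrM ?sqr_ge0 // sqrtr_sqr. Qed.

Lemma enormN u : enorm (- u) = enorm u.
Proof. by rewrite -scaleN1r enormZ normrN normr1 mul1r. Qed.

Lemma coord_le_enorm u i : `|u 0 i| <= enorm u.
Proof.
rewrite -sqrtr_sqr /enorm ler_sqrt ?edot_ge0 //.
rewrite /edot (bigD1 i) //= -expr2 lerDl; apply: sumr_ge0 => j _.
by rewrite -expr2 sqr_ge0.
Qed.


Lemma unit_dot (u : V) : enorm u = 1 -> edot u u = 1.
Proof. by move=> h; rewrite -enorm_sq h expr1n. Qed.

Lemma cone_neg (D N0 NY : V) (Theta a c : R) :
  edot N0 N0 = 1 -> edot NY NY = 1 -> a = edot NY N0 -> c = edot D (- N0) ->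
  0 <= Theta -> Theta < a -> 0 < edot D D ->
  Num.sqrt (1 - Theta ^+ 2) * enorm D <= c -> edot D NY < 0.
Proof.
move=> u0 uY ea ec T0 ha Epos hcone.
have T1 : Theta < 1.
  have := dot_le_norm NY N0; rewrite /enorm u0 uY sqrtr1 mulr1 -ea; lra.
have := CS (D + c *: N0) (NY - a *: N0).
rewrite !(edotDl, edotDr, edotBl, edotBr, edotNl, edotNr, edotZl, edotZr) u0 uY.
rewrite ?(edotC N0 NY) -ea ?(edotC N0 D).
have -> : edot D N0 = - c by rewrite ec edotNr opprK.
move=> hCS.
set E := edot D D in hCS Epos *. set x := edot D NY in hCS *.
have {}hCS : (x + a * c) ^+ 2 <= (E - c ^+ 2) * (1 - a ^+ 2).
  by move: hCS; congr (_ <= _); ring.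
set s := Num.sqrt (1 - Theta ^+ 2) in hcone.
have s2 : s ^+ 2 = 1 - Theta ^+ 2 by rewrite sqr_sqrtr //; nra.
have s0 : 0 <= s := sqrtr_ge0 _.
have nE2 : enorm D ^+ 2 = edot D D := enorm_sq D.
have nE0 : 0 <= enorm D := enorm_ge0 D.
have c0 : 0 <= c by apply: le_trans hcone; rewrite mulr_ge0.
have c2 : (1 - Theta ^+ 2) * edot D D <= c ^+ 2.
  by rewrite -s2 -nE2 -exprMn ler_pXn2r ?nnegrE ?mulr_ge0.
have hlt : (1 - a ^+ 2) * edot D D < c ^+ 2.
  apply: lt_le_trans c2; rewrite ltr_pM2r //; nra.
have a0 : 0 <= a by lra.
have hq : (edot D NY + a * c) ^+ 2 < (a * c) ^+ 2.
  apply: le_lt_trans hCS _.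
  have -> : (E - c ^+ 2) * (1 - a ^+ 2) = (1 - a ^+ 2) * E - c ^+ 2 + (a * c) ^+ 2 by ring.
  by rewrite gtrDr subr_lt0.
have ac0 : 0 <= a * c by rewrite mulr_ge0.
rewrite ltNge; apply/negP => hx.
have : (a * c) ^+ 2 <= (x + a * c) ^+ 2.
  by rewrite ler_pXn2r ?nnegrE ?addr_ge0 // lerDr.
by rewrite leNgt hq.
Qed.

End Helpers.

Theorem lemma2p8 (R : realType) (n : nat) (Omega : set 'rV[R]_(n.+1))
  (N : 'rV[R]_(n.+1) -> 'rV[R]_(n.+1)) (Theta r : R) :
  convex_body Omega -> C1_boundary Omega ->
  (forall X, bdry Omega X -> outward_unit_normal Omega X (N X)) ->
  0 <= Theta < 1 -> 0 < r ->
  omega Omega N r < Num.sqrt (2 - 2 * Theta) ->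
  forall X0, bdry Omega X0 ->
    (eball X0 r `&` bdry Omega `<=` bdry_plus Omega N Theta X0) /\
    ([set X | edot (X - X0) (- N X0) >= Num.sqrt (1 - Theta ^+ 2) * enorm (X - X0)]
       `&` eball X0 r `<=` Omega).
Proof.
move=> [cO [convO [P [e e0 ballP]]]] _ HN /andP[T0 T1] r0 hom X0 bX0.
have unitN X : bdry Omega X -> edot (N X) (N X) = 1.
  by move=> bX; apply: unit_dot; case: (HN X bX).
have part1 : forall X, bdry Omega X -> enorm (X - X0) < r ->
    edot (N X) (N X0) > Theta.
  move=> X bX hX.
  set d := enorm (N X - N X0).
  have hd : d <= omega Omega N r.
    apply: ub_le_sup.
      exists 2 => _ [X1 [X2 [b1 b2 _ ->]]].
      apply: le_trans (enorm_triangle _ _) _.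
      rewrite enormN (proj1 (HN _ b1)) (proj1 (HN _ b2)); lra.
    by exists X, X0; split.
  have hs : d < Num.sqrt (2 - 2 * Theta) by apply: le_lt_trans hom.
  have hs2 : Num.sqrt (2 - 2 * Theta) ^+ 2 = 2 - 2 * Theta.
    by rewrite sqr_sqrtr //; lra.
  have d0 : 0 <= d by apply: enorm_ge0.
  have hd2 : d ^+ 2 < 2 - 2 * Theta.
    have hsq := sqrtr_ge0 (2 - 2 * Theta). nra.
  move: hd2; rewrite /d enorm_sq !(edotBl, edotBr) unitN // unitN // (edotC (N X0)).
  lra.
split.
  move=> X [hX bX]; split => //; exact: part1.

have clO : closed Omega by apply: compact_closed.
have OX0 : Omega X0.
  apply: clO => B /nbhs_ballP [eps eps0 hB].
  have [[Y [OY hY]] _] := bX0 eps eps0.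
  exists Y; split => //; apply: hB; split => // i j.
  rewrite (ord1 i) /ball /= -normrN opprB.
  apply: le_lt_trans hY.
  have := coord_le_enorm (Y - X0) j; by rewrite !mxE.
move=> X [hcone hX].
rewrite /eball /= in hX.
set D := X - X0 in hcone hX.
have [E0|E0] := eqVneq (edot D D) 0.
  have := edot_eq0 _ E0 => /eqP; rewrite subr_eq0 => /eqP ->; exact: OX0.
have Epos : 0 < edot D D by rewrite lt0r E0 edot_ge0.
set c := edot D (- N X0) in hcone.
set s := Num.sqrt (1 - Theta ^+ 2) in hcone.
have cone : forall Y, bdry Omega Y -> enorm (Y - X0) < r -> edot D (N Y) < 0.
  move=> Y bY hY.
  have ha := part1 Y bY hY.
  set a := edot (N Y) (N X0) in ha.
  apply: (cone_neg D (N X0) (N Y) Theta a c) => //.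
  - exact: unitN.
  - exact: unitN.

have [//|nOX] := pselect (Omega X).
exfalso.
have enorm0 : enorm (0 : 'rV[R]_(n.+1)) = 0.
  by rewrite -[0 : 'rV[R]_(n.+1)](scale0r 0) enormZ normr0 mul0r.
set L := enorm (P - X0).
have L0 : 0 <= L := enorm_ge0 _.
set eps := Num.min (1/2) (r / (2 * (L + 1))).
have eps0 : 0 < eps.
  rewrite lt_min; apply/andP; split; first lra.
  by apply: divr_gt0 => //; lra.
have eps1 : eps <= 1/2 by rewrite ge_min lexx.
have epsL : eps * L < r.
  have h : eps <= r / (2 * (L + 1)) by rewrite ge_min lexx orbT.
  set q := r / (2 * (L + 1)) in h.
  have q0 : 0 < q by apply: divr_gt0 => //; lra.
  have hq : q * (2 * (L + 1)) = r by rewrite /q mulrVK // unitfE; lra.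
  have : eps * L <= q * L by rewrite ler_wpM2r.
  nra.
set Pe := X0 + eps *: (P - X0).
have ballPe : forall Z, enorm (Z - Pe) < eps * e -> Omega Z.
  move=> Z hZ.
  set Q := P + eps^-1 *: (Z - Pe).
  have -> : Z = (1 - eps) *: X0 + eps *: Q.
    apply/rowP => i; rewrite /Q /Pe !mxE; field; lra.
  apply: convO => //; last (apply/andP; split; lra).
  apply: ballP; rewrite /eball /= /Q addrAC subrr add0r enormZ ger0_norm; last first.
    by rewrite invr_ge0 ltW.
  by rewrite mulrC ltr_pdivrMr // mulrC.
have OPe : Omega Pe by apply: ballPe; rewrite subrr enorm0 mulr_gt0.
set W := Pe - X.
set S := [set l : R | (0 <= l <= 1) /\ Omega (X + l *: W)].
have S1 : S 1.
  split; first by rewrite ler01 lexx.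
  by rewrite scale1r /W addrC subrK.
have Sne : S !=set0 by exists 1.
have Slb : has_lbound S by exists 0 => l [/andP[]].
set lam := inf S.
have lam0 : 0 <= lam by apply: lb_le_inf => // l [/andP[]].
have lam1 : lam <= 1 by exact: (ge_inf Slb S1).
set K := enorm W.
have K0 : 0 <= K := enorm_ge0 _.
set Y := X + lam *: W.
have distY : forall l, enorm ((X + l *: W) - Y) = `|l - lam| * K.
  move=> l; have -> : X + l *: W - Y = (l - lam) *: W.
    by apply/rowP => i; rewrite /Y !mxE; ring.
  by rewrite enormZ.
have bY : bdry Omega Y.
  move=> e' e'0; set t := e' / (K + 1).
  have t0 : 0 < t by apply: divr_gt0 => //; lra.
  have htK : t * (K + 1) = e' by rewrite /t mulrVK // unitfE; lra.
  have tK : t * K < e' by nra.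
  split.
  - have hlt : inf S < lam + t by rewrite -/lam; lra.
    have [l Sl hl] := inf_lt Sne hlt.
    exists (X + l *: W); split; first by case: Sl.
    have hl0 : lam <= l by exact: (ge_inf Slb Sl).
    rewrite distY ger0_norm; last lra.
    have : (l - lam) * K <= t * K by rewrite ler_wpM2r //; lra.
    lra.
  - have [lz|lpos] : lam = 0 \/ 0 < lam.
      by have := lam0; rewrite le_eqVlt => /orP[/eqP h|h]; [left|right].
      exists X; split => //; rewrite /Y lz scale0r addr0 subrr enorm0 //.
    set l := Num.max 0 (lam - t).
    have ll : l < lam by rewrite gt_max lpos /=; lra.
    have l0 : 0 <= l by rewrite le_max lexx.
    have l1 : l <= 1 by rewrite ge_max ler01 /=; lra.
    have lt : lam - t <= l by rewrite le_max lexx orbT.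
    exists (X + l *: W); split.
      move=> OXl.
      have : lam <= l by apply: (ge_inf Slb); split => //; rewrite l0 l1.
      lra.
    rewrite distY ler0_norm; last lra.
    have : (- (l - lam)) * K <= t * K by rewrite ler_wpM2r //; lra.
    lra.
have lam_lt1 : lam < 1.
  rewrite lt_neqAle lam1 andbT; apply/eqP => E1.
  have [_ [Z [nZ hZ]]] := bY (eps * e) (mulr_gt0 eps0 e0).
  apply: nZ; apply: ballPe.
  have YPe : Y = Pe by rewrite /Y E1 scale1r /W addrC subrK.
  by move: hZ; rewrite YPe.
have YX0 : enorm (Y - X0) < r.
  have -> : Y - X0 = (1 - lam) *: D + lam *: (eps *: (P - X0)).
    by apply/rowP => i; rewrite /Y /W /Pe /D !mxE; ring.
  apply: le_lt_trans (enorm_triangle _ _) _.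
  rewrite !enormZ !ger0_norm -/L; [|lra|lra|lra].
  have hD0 : 0 <= enorm D := enorm_ge0 _.
  nra.
have hdY := cone Y bY YX0.
have [_ sup] := HN Y bY.
have uY := unitN Y bY.
have epe : 0 < eps * e by rewrite mulr_gt0.
have h1 : edot (Pe - Y) (N Y) <= - (eps * e / 2).
  have OZ : Omega (Pe + (eps * e / 2) *: N Y).
    apply: ballPe; rewrite addrAC subrr add0r enormZ /enorm uY sqrtr1 mulr1.
    by rewrite ger0_norm; lra.
  have := sup _ OZ.
  by rewrite addrAC => h; rewrite edotDl edotZl uY in h; lra.
have h2 : edot (X0 - Y) (N Y) <= 0 := sup X0 OX0.
have e1 : Pe - Y = (1 - lam) *: W.
  by apply/rowP => i; rewrite /Y /W !mxE; ring.
have e2 : X0 - Y = - D - lam *: W.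
  by apply/rowP => i; rewrite /Y /D !mxE; ring.
rewrite e1 edotZl in h1.
rewrite e2 edotBl edotNl edotZl in h2.
have hW : edot W (N Y) < 0.
  rewrite ltNge; apply/negP => hw.
  have : 0 <= (1 - lam) * edot W (N Y) by rewrite mulr_ge0 // subr_ge0 ltW.
  lra.
have : lam * edot W (N Y) <= 0 by rewrite mulr_ge0_le0 // ltW.
lra.
Qed.
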